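(* Let $\rho\in(0,1)$ and $\lambda=\frac{1-\rho}{1+\rho}$. Let $(x_i)_{i\in\mathbb Z}$ be real numbers with $|x_i|<M$ for all $i$, for some constant $M<\infty$. Define $y_i(k)$ for all $i\in\mathbb Z$ and $k\ge 0$ by $y_i(0)=\lambda x_i$; $y_i(1)=y_i(0)+\rho\,(y_{i-1}(0)+y_{i+1}(0))$; $y_i(2)=y_i(1)+\rho\,(y_{i-1}(1)-y_{i-1}(0))+\rho\,(y_{i+1}(1)-y_{i+1}(0))-2\rho^2 y_i(0)$; and for $k\ge 2$, $y_i(k+1)=y_i(k)+\rho\,(y_{i-1}(k)-y_{i-1}(k-1))+\rho\,(y_{i+1}(k)-y_{i+1}(k-1))-\rho^2\,(y_i(k-1)-y_i(k-2))$. Then for every $i\in\mathbb Z$, $$\lim_{k\to\infty}y_i(k)=\frac{1-\rho}{1+\rho}\Big(x_i+\sum_{j=1}^\infty\rho^j\,(x_{i-j}+x_{i+j})\Big).$$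
   Context: Sensors indexed by $i\in\mathbb Z$ are placed along a line; sensor $i$ holds a time-invariant measurement $x_i$ and a consensus variable $y_i(k)$ at discrete times $k=0,1,2,\dots$; sensor $i$ may only use its own values and those of sensors $i-1$ and $i+1$. *)

(* Defs.v *)
From Stdlib Require Import Reals ZArith.
Open Scope R_scope.

(* Main.v *)
Require Import Defs.
From Stdlib Require Import Reals ZArith.
Open Scope R_scope.
From Stdlib Require Import Lra Lia.
From Coquelicot Require Import Coquelicot.

Theorem theorem1 (rho : R) (x : Z -> R) (y : Z -> nat -> R)
  (Hrho : 0 < rho < 1)
  (Hbdd : exists M : R, forall i : Z, Rabs (x i) < M)
  (H0 : forall i : Z, y i 0%nat = (1 - rho) / (1 + rho) * x i)
  (H1 : forall i : Z,
      y i 1%nat = y i 0%nat + rho * (y (i - 1)%Z 0%nat + y (i + 1)%Z 0%nat))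
  (H2 : forall i : Z,
      y i 2%nat = y i 1%nat
                  + rho * (y (i - 1)%Z 1%nat - y (i - 1)%Z 0%nat)
                  + rho * (y (i + 1)%Z 1%nat - y (i + 1)%Z 0%nat)
                  - 2 * rho ^ 2 * y i 0%nat)
  (Hrec : forall (i : Z) (k : nat), (2 <= k)%nat ->
      y i (S k) = y i k
                  + rho * (y (i - 1)%Z k - y (i - 1)%Z (k - 1)%nat)
                  + rho * (y (i + 1)%Z k - y (i + 1)%Z (k - 1)%nat)
                  - rho ^ 2 * (y i (k - 1)%nat - y i (k - 2)%nat)) :
  forall i : Z,
    exists s : R,
      infinite_sum
        (fun j : nat => rho ^ (S j) *
           (x (i - Z.of_nat (S j))%Z + x (i + Z.of_nat (S j))%Z)) s /\
      Un_cv (fun k : nat => y i k) ((1 - rho) / (1 + rho) * (x i + s)).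
Proof.
  remember ((1 - rho) / (1 + rho)) as lam eqn:Hlam.
  assert (Hd : forall n i, y i (S n) - y i n =
     rho ^ (S n) * (y (i - Z.of_nat (S n))%Z 0%nat + y (i + Z.of_nat (S n))%Z 0%nat)).
  { assert (Hp : forall n, (forall i, y i (S n) - y i n =
       rho ^ (S n) * (y (i - Z.of_nat (S n))%Z 0%nat + y (i + Z.of_nat (S n))%Z 0%nat)) /\
       (forall i, y i (S (S n)) - y i (S n) =
       rho ^ (S (S n)) * (y (i - Z.of_nat (S (S n)))%Z 0%nat + y (i + Z.of_nat (S (S n)))%Z 0%nat))).
    { induction n as [|n [IHa IHb]].
      - assert (A : forall i, y i 1%nat - y i 0%nat =
          rho ^ 1 * (y (i - Z.of_nat 1)%Z 0%nat + y (i + Z.of_nat 1)%Z 0%nat)).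
        { intro i. rewrite H1. simpl (Z.of_nat 1). ring. }
        split; [exact A|].
        intro i. rewrite H2.
        assert (E1 := A (i - 1)%Z). assert (E2 := A (i + 1)%Z).
        simpl (Z.of_nat 1) in E1, E2. simpl (Z.of_nat 2).
        replace (i - 1 - 1)%Z with (i - 2)%Z in E1 by lia.
        replace (i - 1 + 1)%Z with i in E1 by lia.
        replace (i + 1 - 1)%Z with i in E2 by lia.
        replace (i + 1 + 1)%Z with (i + 2)%Z in E2 by lia.
        replace (rho * (y (i - 1)%Z 1%nat - y (i - 1)%Z 0%nat)) with (rho * (rho ^ 1 * (y (i - 2)%Z 0%nat + y i 0%nat))) by (rewrite <- E1; ring).
        replace (rho * (y (i + 1)%Z 1%nat - y (i + 1)%Z 0%nat)) with (rho * (rho ^ 1 * (y i 0%nat + y (i + 2)%Z 0%nat))) by (rewrite <- E2; ring).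
        ring.
      - split; [exact IHb|].
        intro i. rewrite (Hrec i (S (S n))) by lia.
        replace (S (S n) - 1)%nat with (S n) by lia.
        replace (S (S n) - 2)%nat with n by lia.
        assert (E1 := IHb (i - 1)%Z). assert (E2 := IHb (i + 1)%Z).
        assert (E3 := IHa i).
        rewrite E3.
        replace (rho * (y (i - 1)%Z (S (S n)) - y (i - 1)%Z (S n))) with
          (rho * (rho ^ S (S n) * (y (i - 1 - Z.of_nat (S (S n)))%Z 0%nat + y (i - 1 + Z.of_nat (S (S n)))%Z 0%nat))) by (rewrite <- E1; ring).
        replace (rho * (y (i + 1)%Z (S (S n)) - y (i + 1)%Z (S n))) with
          (rho * (rho ^ S (S n) * (y (i + 1 - Z.of_nat (S (S n)))%Z 0%nat + y (i + 1 + Z.of_nat (S (S n)))%Z 0%nat))) by (rewrite <- E2; ring).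
        replace (i - 1 - Z.of_nat (S (S n)))%Z with (i - Z.of_nat (S (S (S n))))%Z by lia.
        replace (i + 1 + Z.of_nat (S (S n)))%Z with (i + Z.of_nat (S (S (S n))))%Z by lia.
        replace (i - 1 + Z.of_nat (S (S n)))%Z with (i + Z.of_nat (S n))%Z by lia.
        replace (i + 1 - Z.of_nat (S (S n)))%Z with (i - Z.of_nat (S n))%Z by lia.
        simpl pow. ring. }
    intros n i. exact (proj1 (Hp n) i). }
  intro i.
  pose (f := (fun j : nat => rho ^ (S j) *
           (x (i - Z.of_nat (S j))%Z + x (i + Z.of_nat (S j))%Z))).
  assert (Hy : forall n, y i (S n) = lam * (x i + sum_f_R0 f n)).
  { induction n as [|n IH].
    - simpl sum_f_R0. assert (E := Hd 0%nat i). rewrite !H0 in E.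
      unfold f. simpl pow in *. lra.
    - simpl sum_f_R0. assert (E := Hd (S n) i). rewrite !H0 in E.
      unfold f at 2. lra. }
  destruct Hbdd as [M HM].
  assert (Hex : ex_series f).
  { apply (ex_series_le f (fun n => (2 * M * rho) * rho ^ n)).
    - intro n. change (norm (f n)) with (Rabs (f n)).
      unfold f. rewrite Rabs_mult, Rabs_right by (apply Rle_ge, pow_le; lra).
      replace (2 * M * rho * rho ^ n) with (rho ^ S n * (M + M)) by (simpl; ring).
      apply Rmult_le_compat_l; [apply pow_le; lra|].
      eapply Rle_trans; [apply Rabs_triang|].
      generalize (HM (i - Z.of_nat (S n))%Z) (HM (i + Z.of_nat (S n))%Z). lra.
    - assert (G : ex_series (fun n => rho ^ n)) by (apply ex_series_geom; rewrite Rabs_right; lra).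
      exact (@ex_series_scal_l R_AbsRing R_NormedModule (2 * M * rho) _ G). }
  destruct Hex as [s Hs].
  apply is_series_Reals in Hs.
  exists s. split; [exact Hs|].
  apply (CV_shift _ 1%nat).
  intros eps Heps.
  assert (Hl : 0 < lam) by (rewrite Hlam; apply Rdiv_lt_0_compat; lra).
  destruct (Hs (eps / lam)) as [N HN]; [apply Rdiv_lt_0_compat; lra|].
  exists N. intros n Hn. rewrite Nat.add_1_r, Hy.
  unfold R_dist. 
  replace (lam * (x i + sum_f_R0 f n) - lam * (x i + s)) with (lam * (sum_f_R0 f n - s)) by ring.
  rewrite Rabs_mult, (Rabs_right lam) by lra.
  specialize (HN n Hn). unfold R_dist in HN.
  apply (Rmult_lt_compat_l lam) in HN; [|lra].
  replace (lam * (eps / lam)) with eps in HN by (field; lra). exact HN.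
Qed.
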